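(* Let $\Upsilon=1$ if $\xi_p\in N_{K/F}(K^\times)$ and $\Upsilon=0$ otherwise. (1) If $\Upsilon=1$, there exists $\delta\in K^\times$ with $[\delta]\in J_1$ and $e([\delta])\neq0$; moreover, the elements $\delta\in K^\times$ with $[\delta]\in J_1$ and $e([\delta])\ne 0$ are precisely those for which $K(\sqrt[p]{\delta})/F$ is a cyclic extension of degree $p^2$. (2) If $\Upsilon=0$, then $[\sqrt[p]{a}]\in J_2\setminus J_1$, $e([\sqrt[p]{a}])\neq0$, and $e([\gamma])=0$ for all $[\gamma]\in J_1$.
   Context: $p$ odd prime; $F$ a field containing a primitive $p$th root of unity $\xi_p$; $K=F(\sqrt[p]{a})$, $a\in F^\times$, cyclic of degree $p$; $G=\mathrm{Gal}(K/F)=\langle\sigma\rangle$ with $\sigma(\sqrt[p]{a})=\xi_p\sqrt[p]{a}$; $\rho=\sigma-1$. $J=K^\times/K^{\times p}$ as a multiplicative $\mathbb{F}_p[G]$-module, $[\gamma]$ the class of $\gamma$; $J_i=\ker(\rho^i)$ (note $J_1\subseteq J_2\subseteq J_{p-1}$ since $p\ge3$). For $[\gamma]\in J_{p-1}$, the index $e([\gamma])\in\mathbb{F}_p$ is defined by $\xi_p^{e([\gamma])}=\sigma(\delta)/\delta$ where $\delta\in K$ is any $p$th root of $N_{K/F}(\gamma)$. *)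

(* Defs.v *)
From HB Require Import structures.
From mathcomp Require Import all_boot all_order all_algebra all_fingroup all_solvable all_field.
From Stdlib Require Import ClassicalEpsilon.
Set Implicit Arguments. Unset Strict Implicit. Unset Printing Implicit Defensive.
Import GRing.Theory.
Local Open Scope ring_scope.

(* rho = sigma - 1, written multiplicatively on K^x : gamma |-> sigma(gamma)/gamma *)
Definition rho (F : fieldType) (L : splittingFieldType F) (K : {vspace L})
  (sigma : gal_of K) (x : L) : L := sigma x / x.

(* [gamma] \in J_i = ker(rho^i) on J = K^x / K^{x p}:
   rho^i(gamma) is a p-th power of an element of K. *)
Definition inJ (F : fieldType) (L : splittingFieldType F) (p : nat)
  (K : {vspace L}) (sigma : gal_of K) (i : nat) (gamma : L) : Prop :=
  exists2 eta, eta \in K & iter i (rho sigma) gamma = eta ^+ p.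

(* The index e([gamma]) in F_p = {0,...,p-1}: the e with
   xi^e = sigma(delta)/delta, where delta \in K is a p-th root of N_{K/F}(gamma). *)
Definition kindex (F : fieldType) (L : splittingFieldType F) (p : nat) (xi : F)
  (K : {vspace L}) (sigma : gal_of K) (gamma : L) : nat :=
  epsilon (inhabits 0%N) (fun e => (e < p)%N /\
     exists2 delta, delta \in K &
       delta ^+ p = galNorm 1%VS K gamma /\ sigma delta = (xi ^+ e)%:A * delta).

Definition cyclic_ext_of_degree (F : fieldType) (L : splittingFieldType F)
  (E : {vspace L}) (n : nat) : Prop :=
  [/\ galois 1%VS E, cyclic 'Gal(E / 1%VS) & \dim E = n].

(* Main.v *)
Set Warnings "-notation-overridden,-ambiguous-paths,-notation-incompatible-prefix".
Require Import Defs.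
From HB Require Import structures.
From mathcomp Require Import all_boot all_order all_algebra all_fingroup all_solvable all_field.
Import GRing.Theory.
Local Open Scope ring_scope.
From Stdlib Require Import ClassicalEpsilon.
Local Open Scope ring_scope.

Section Main.
Local Open Scope group_scope.
Local Open Scope ring_scope.
Variables (F : fieldType) (L : splittingFieldType F) (p : nat) (xi a : F)
  (alpha : L) (sigma : gal_of <<1; alpha>>%VS).
Hypotheses (pp : prime p) (op : odd p) (pxi : p.-primitive_root xi)
  (a0 : a != 0) (alphap : alpha ^+ p = a%:A) (dimK : \dim <<1; alpha>>%VS = p)
  (sa : sigma alpha = xi%:A * alpha).

Local Notation K := <<1; alpha>>%VS.
Local Notation z := (xi%:A : L).

Lemma fM (f : 'AEnd(L)) (x y : L) : f (x * y) = f x * f y.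
Proof. exact: rmorphM. Qed.
Lemma fX (f : 'AEnd(L)) (x : L) n : f (x ^+ n) = f x ^+ n.
Proof. exact: rmorphXn. Qed.
Lemma fV (f : 'AEnd(L)) (x : L) : f (x^-1) = (f x)^-1.
Proof. exact: fmorphV. Qed.
Lemma fdiv (f : 'AEnd(L)) (x y : L) : f (x / y) = f x / f y.
Proof. by rewrite fM fV. Qed.
Lemma fprod (f : 'AEnd(L)) n (G : nat -> L) : f (\prod_(i < n) G i) = \prod_(i < n) f (G i).
Proof. exact: rmorph_prod. Qed.

Lemma f_eq0 (f : 'AEnd(L)) (x : L) : (f x == 0) = (x == 0).
Proof. exact: fmorph_eq0. Qed.

Lemma p_gt1 : (1 < p)%N. Proof. exact: prime_gt1. Qed.
Lemma p_gt0 : (0 < p)%N. Proof. exact: prime_gt0. Qed.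

Lemma z_prim : p.-primitive_root z.
Proof. by rewrite (fmorph_primitive_root (in_alg L)). Qed.

Lemma z_neq0 : z != 0.
Proof. by apply/eqP => z0; have := prim_expr_order z_prim; rewrite z0 expr0n gtn_eqF ?p_gt0 // => /eqP; rewrite eq_sym oner_eq0. Qed.

Lemma zX_in1 k : z ^+ k \in 1%VS.
Proof. by rewrite rpredX // rpredZ // mem1v. Qed.

Lemma algX (k : nat) : (xi ^+ k)%:A = z ^+ k :> L.
Proof. exact: (rmorphXn (in_alg L)). Qed.

Lemma galK1 (g : gal_of K) : g \in ('Gal(K / 1%VS))%g.
Proof. by rewrite gal_kAut ?sub1v // kAut1E limg_gal. Qed.

Lemma galF (g : gal_of K) x : x \in 1%VS -> g x = x.
Proof. by move=> x1; rewrite (fixed_gal (sub1v _) (galK1 g)). Qed.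

Lemma alpha_neq0 : alpha != 0.
Proof.
apply/eqP => a0'; move: alphap; rewrite a0' expr0n gtn_eqF ?p_gt0 //.
by move/esym/eqP; rewrite scaler_eq0 oner_eq0 orbF (negbTE a0).
Qed.

Lemma alphaK : alpha \in K. Proof. exact: memv_adjoin. Qed.

Lemma iter_K n x : x \in K -> iter n sigma x \in K.
Proof. by move=> Kx; elim: n => //= n IH; apply: memv_gal. Qed.

Lemma iter_pow n x : x \in K -> (sigma ^+ n)%g x = iter n sigma x.
Proof.
move=> Kx; elim: n => [|n IH]; first by rewrite expg0 gal_id.
by rewrite expgSr galM ?IH // memv_gal.
Qed.

Lemma iter_scal n (w y : L) : w \in 1%VS -> iter n sigma (w * y) = w * iter n sigma y.
Proof. by move=> w1; elim: n => //= n ->; rewrite fM galF. Qed.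

Lemma iter_alpha n : iter n sigma alpha = z ^+ n * alpha.
Proof.
elim: n => [|n IH]; first by rewrite expr0 mul1r.
by rewrite iterS IH fM galF ?zX_in1 // sa mulrA exprSr.
Qed.

Lemma rootsP y r : r != 0 -> y ^+ p = r ^+ p -> exists i : 'I_p, y = z ^+ i * r.
Proof.
move=> r0 e; have : (y / r) ^+ p = 1 by rewrite expr_div_n e divff // expf_neq0.
case/(prim_rootP z_prim) => i Hi; exists i; by rewrite -Hi divfK.
Qed.

Arguments rootsP {y r}.

Lemma gal_pow (g : gal_of K) : exists i : 'I_p, g = (sigma ^+ i)%g.
Proof.
have : (g alpha) ^+ p = alpha ^+ p by rewrite -fX alphap galF // rpredZ // mem1v.
case/(rootsP alpha_neq0) => i Hi; exists i.
apply/eqP; rewrite (gal_adjoin_eq (K := 1%AS)) ?galK1 //.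
by rewrite iter_pow ?alphaK // iter_alpha Hi.
Qed.

Lemma sigma_p : (sigma ^+ p)%g = 1%g.
Proof.
apply/eqP; rewrite (gal_adjoin_eq (K := 1%AS)) ?galK1 //.
by rewrite iter_pow ?alphaK // iter_alpha prim_expr_order ?z_prim // mul1r gal_id.
Qed.

Lemma iter_p x : x \in K -> iter p sigma x = x.
Proof. by move=> Kx; rewrite -iter_pow // sigma_p gal_id. Qed.

Lemma iter_pm m x : x \in K -> iter (p * m) sigma x = x.
Proof.
move=> Kx; elim: m => [|m IH]; first by rewrite muln0.
by rewrite mulnS iterD IH iter_p.
Qed.

Lemma pow_inj : {in [set: 'I_p] &, injective (fun i : 'I_p => (sigma ^+ i)%g)}.
Proof.
move=> i j _ _ /= e; apply/val_inj/eqP.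
have : (sigma ^+ i)%g alpha = (sigma ^+ j)%g alpha by rewrite e.
rewrite !iter_pow ?alphaK // !iter_alpha => /(mulIf alpha_neq0)/eqP.
by rewrite (eq_prim_root_expr z_prim) !modn_small.
Qed.

Lemma GalK_img : ('Gal(K / 1%VS))%g = [set (sigma ^+ i)%g | i : 'I_p].
Proof.
apply/setP => g; apply/idP/idP => [_ | _]; last exact: galK1.
by have [i ->] := gal_pow g; apply: imset_f.
Qed.

Lemma GalK_gen : generator ('Gal(K / 1%VS))%g sigma.
Proof.
apply/eqP/setP => g; apply/idP/idP => [_ | _]; last exact: galK1.
by have [i ->] := gal_pow g; apply: mem_cycle.
Qed.

Lemma normE x : x \in K -> galNorm 1 K x = \prod_(i < p) iter i sigma x.
Proof.
move=> Kx; rewrite /galNorm GalK_img big_imset /=; last by move=> i j _ _; apply: pow_inj; rewrite inE.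
by apply: eq_bigr => i _; rewrite iter_pow.
Qed.


Definition Q (c : L) (i : nat) := \prod_(l < i) iter l sigma c.

Lemma Q_K c i : c \in K -> Q c i \in K.
Proof. by move=> Kc; apply: rpred_prod => l _; apply: iter_K. Qed.

Lemma QS c i : Q c i.+1 = c * sigma (Q c i).
Proof.
by rewrite /Q big_ord_recl fprod /=.
Qed.

Lemma Q0 c : Q c 0 = 1. Proof. by rewrite /Q big_ord0. Qed.

Lemma Qp c : c \in K -> Q c p = galNorm 1 K c.
Proof. by move=> Kc; rewrite normE. Qed.

Lemma iterQ c b n : sigma b = c * b -> iter n sigma b = Q c n * b.
Proof.
move=> sb; elim: n => [|n IH]; first by rewrite Q0 mul1r.
by rewrite iterS IH fM sb QS mulrA [c * _]mulrC.
Qed.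

Lemma iterQp c g n : sigma g = c ^+ p * g -> iter n sigma g = Q c n ^+ p * g.
Proof.
move=> sg; elim: n => [|n IH]; first by rewrite Q0 expr1n mul1r.
by rewrite iterS IH fM fX sg QS mulrA exprMn [c ^+ p * _]mulrC.
Qed.

Lemma norm_neq0 x : x != 0 -> galNorm 1 K x != 0.
Proof. by rewrite galNorm_eq0. Qed.
Arguments norm_neq0 {x}.

Lemma kindex_spec g k d : galNorm 1 K g != 0 -> (k < p)%N -> d \in K ->
  d ^+ p = galNorm 1 K g -> sigma d = z ^+ k * d -> kindex p xi sigma g = k.
Proof.
move=> N0 kp Kd dp sd.
pose P := fun e => (e < p)%N /\ exists2 delta, delta \in K &
       delta ^+ p = galNorm 1%VS K g /\ sigma delta = (xi ^+ e)%:A * delta.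
have Pk : P k by split => //; exists d => //; rewrite algX.
have := epsilon_spec (inhabits 0%N) P (ex_intro _ k Pk).
rewrite /kindex -/P; set e := epsilon _ _.
case=> ep [d' Kd' [d'p sd']].
have d0 : d != 0 by apply: contraNneq N0 => d0; rewrite -dp d0 expr0n gtn_eqF ?p_gt0.
have [j dj] := rootsP d0 (etrans d'p (esym dp)).
have d'0 : d' != 0 by rewrite dj mulf_neq0 // expf_neq0 ?z_neq0.
move: sd'; rewrite algX {1}dj fM galF ?zX_in1 // sd mulrCA -dj.
move/(mulIf d'0)/eqP; rewrite (eq_prim_root_expr z_prim) !modn_small //.
by move/eqP.
Qed.

Lemma kindex_core g c k : g \in K -> g != 0 -> c \in K -> sigma g = c ^+ p * g ->
  galNorm 1 K c = z ^+ k -> (k < p)%N -> kindex p xi sigma g = k.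
Proof.
move=> Kg g0 Kc sg Nc kp.
apply: (@kindex_spec g k (g * \prod_(i < p) Q c i)) => //.
- exact: norm_neq0.
- by rewrite rpredM // rpred_prod // => i _; apply: Q_K.
- rewrite normE // (eq_bigr _ (fun (i : 'I_p) _ => @iterQp c g i sg)) big_split /= prodrXl.
  by rewrite prodr_const card_ord exprMn mulrC.
have e1 : \prod_(i < p.+1) Q c i = \prod_(i < p) Q c i * z ^+ k.
  by rewrite big_ord_recr /= Qp // Nc.
have e2 : \prod_(i < p.+1) Q c i = c ^+ p * \prod_(i < p) sigma (Q c i).
  rewrite big_ord_recl Q0 mul1r (eq_bigr _ (fun (i : 'I_p) _ => QS c i)) big_split /=.
  by rewrite prodr_const card_ord.
have e3 : c ^+ p * \prod_(i < p) sigma (Q c i) = \prod_(i < p) Q c i * z ^+ k.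
  by rewrite -e2 e1.
rewrite fM sg fprod mulrAC e3.
rewrite [RHS]mulrCA [RHS]mulrC; congr (_ * _); exact: mulrC.
Qed.

Lemma iter_z n j : iter n sigma (z ^+ j) = z ^+ j.
Proof. elim: n => //= n ->. exact: galF (zX_in1 j). Qed.
Lemma norm_z j : galNorm 1 K (z ^+ j) = 1.
Proof.
have Kz : z ^+ j \in K by apply: (subvP (sub1v _)); exact: zX_in1.
rewrite (normE _ Kz).
rewrite (eq_bigr _ (fun (i : 'I_p) _ => iter_z i j)).
rewrite prodr_const card_ord -exprM mulnC exprM.
rewrite (prim_expr_order z_prim); exact: expr1n.
Qed.
Lemma norm_root x : (galNorm 1 K x) ^+ p = 1 ->
  exists k : 'I_p, galNorm 1 K x = z ^+ k.
Proof. by move=> /(prim_rootP z_prim)[k ->]; exists k. Qed.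

Definition Ups := exists2 x, (x \in K) && (x != 0) & galNorm 1%VS K x = xi%:A.

Lemma upsilon_of x k : x \in K -> x != 0 -> galNorm 1 K x = z ^+ k ->
  (0 < k < p)%N -> Ups.
Proof.
move=> Kx x0 Nx /andP[k0 kp].
have cop : coprime k p by rewrite coprime_sym prime_coprime // gtnNdvd.
have pzk : p.-primitive_root (z ^+ k) by rewrite prim_root_exp_coprime ?z_prim.
have [j zj] := prim_rootP pzk (prim_expr_order z_prim).
exists (x ^+ j); first by rewrite rpredX // expf_neq0.
by rewrite galNormX Nx -zj.
Qed.

Lemma two_lt_p : (2 < p)%N.
Proof.
have := p_gt1; rewrite leq_eqVlt => /orP[/eqP p2|] //.
by move: op; rewrite -p2.
Qed.

Lemma norm_alpha : galNorm 1 K alpha = alpha ^+ p.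
Proof.
rewrite (normE _ alphaK) (eq_bigr _ (fun (i : 'I_p) _ => iter_alpha i)) big_split /=.
rewrite prodrXr prodr_const card_ord.
have -> : (\sum_(i < p) i = 'C(p, 2))%N by rewrite -bin2_sum big_mkord.
have : (p %| 'C(p, 2))%N by rewrite prime_dvd_bin // two_lt_p.
by rewrite (prim_order_dvd z_prim) => /eqP ->; rewrite mul1r.
Qed.

Lemma kindex_alpha : kindex p xi sigma alpha = 1%N.
Proof.
apply: (@kindex_spec alpha 1%N alpha).
- exact: (norm_neq0 alpha_neq0).
- exact: p_gt1.
- exact: alphaK.
- by rewrite norm_alpha.
- by rewrite sa expr1.
Qed.

Lemma rho_alpha : rho sigma alpha = z.
Proof. by rewrite /rho sa mulfK // alpha_neq0. Qed.


Lemma z_in1 : z \in 1%VS. Proof. by rewrite rpredZ // mem1v. Qed.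

Lemma inJ2_alpha : inJ p sigma 2 alpha.
Proof.
exists 1; first exact: mem1v.
rewrite /= rho_alpha /rho (galF sigma z z_in1) divff ?z_neq0 //.
exact/esym/expr1n.
Qed.

Lemma nJ1_alpha : ~ Ups -> ~ inJ p sigma 1 alpha.
Proof.
move=> nU [eta Keta /=]; rewrite rho_alpha => zeta.
have eta0 : eta != 0.
  by apply: contraNneq z_neq0 => e0; rewrite zeta e0 expr0n gtn_eqF ?p_gt0.
have [k Nk] : exists k : 'I_p, galNorm 1 K eta = z ^+ k.
  apply: norm_root; rewrite -galNormX -zeta.
  have := norm_z 1; by rewrite expr1.
have sa' : sigma alpha = eta ^+ p * alpha by rewrite sa zeta.
have := @kindex_core alpha eta k alphaK alpha_neq0 Keta sa' Nk (ltn_ord k).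
rewrite kindex_alpha => k1.
apply: nU; apply: (@upsilon_of eta k) => //.
by rewrite -k1 p_gt1.
Qed.

Lemma J1_index0 : ~ Ups -> forall g, g \in K -> g != 0 -> inJ p sigma 1 g ->
  kindex p xi sigma g = 0%N.
Proof.
move=> nU g Kg g0 [eta Keta /= rg].
have sg : sigma g = eta ^+ p * g by rewrite -rg /rho divfK.
have Ng0 := norm_neq0 g0.
have [k Nk] : exists k : 'I_p, galNorm 1 K eta = z ^+ k.
  apply: norm_root; rewrite -galNormX -rg /rho galNormM galNormV.
  by rewrite galNorm_gal ?galK1 // mulfV.
rewrite (@kindex_core g eta k) //.
have : (k == 0%N :> nat) || (0 < k)%N by case: (k : nat).
case/orP => [/eqP -> //| k0]; exfalso; apply: nU.
have eta0 : eta != 0.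
  apply: contraNneq z_neq0 => e0.
  suff : sigma g = 0 by move/eqP; rewrite f_eq0 (negbTE g0).
  by rewrite sg e0 expr0n gtn_eqF ?p_gt0 // mul0r.
apply: (@upsilon_of eta k) => //; by rewrite k0 ltn_ord.
Qed.


Lemma part1a : Ups -> exists2 delta, (delta \in K) && (delta != 0) &
  inJ p sigma 1 delta /\ kindex p xi sigma delta != 0%N.
Proof.
case=> x /andP[Kx x0] Nx.
have N1 : galNorm 1 K (x ^+ p) == 1.
  by rewrite galNormX Nx (prim_expr_order z_prim).
have /(Hilbert's_theorem_90 GalK_gen (rpredX p Kx))[b [Kb b0] xb] := N1.
have Kg : b^-1 \in K by rewrite rpredV.
have g0 : b^-1 != 0 by rewrite invr_neq0.
have sg : sigma (b^-1) = x ^+ p * b^-1 by rewrite fV xb mulrAC divff // mul1r.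
exists b^-1; first by rewrite Kg g0.
split; first by exists x => //=; rewrite /rho sg mulfK.
have Nx1 : galNorm 1 K x = z ^+ 1 by rewrite expr1.
by rewrite (@kindex_core (b^-1) x 1%N Kg g0 Kx sg Nx1 p_gt1).
Qed.


Lemma galE1 (E : {subfield L}) (g : gal_of E) : g \in ('Gal(E / 1%VS))%g.
Proof. by rewrite gal_kAut ?sub1v // kAut1E limg_gal. Qed.

Section Iff.
Variables (delta beta : L).
Hypotheses (Kd : delta \in K) (d0 : delta != 0) (bp : beta ^+ p = delta).
Local Notation E := <<<<1; alpha>>%AS; beta>>%AS.

Lemma beta0 : beta != 0.
Proof. by apply: contraNneq d0 => b0; rewrite -bp b0 expr0n gtn_eqF ?p_gt0. Qed.

Lemma betaE : beta \in E. Proof. exact: memv_adjoin. Qed.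
Lemma KE : (K <= E)%VS. Proof. exact: subv_adjoin. Qed.

Lemma dimE_le : (\dim E <= p * p)%N.
Proof.
rewrite dim_Fadjoin dimK leq_mul2r; apply/orP; right.
have q0 : ('X^p - delta%:P : {poly L}) != 0.
  by rewrite -size_poly_eq0 size_XnsubC ?p_gt0.
have Kq : ('X^p - delta%:P : {poly L}) \is a polyOver K by rewrite polyOverXnsubC.
have rq : root ('X^p - delta%:P) beta by rewrite rootE !hornerE bp subrr.
have := dvdp_leq q0 (minPoly_dvdp Kq rq).
by rewrite size_minPoly size_XnsubC ?p_gt0.
Qed.

Lemma sigmaE_sub : sigma beta \in E -> (sigma @: E <= E)%VS.
Proof.
move=> sbE; rewrite aimg_adjoin.
apply/FadjoinP; split => //. have -> : (asval (sigma @: <<1; alpha>>%AS)%AS) = K by exact: limg_gal. exact: KE.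
Qed.

Lemma tau_iter (sE : (sigma @: E <= E)%VS) n x : x \in E ->
  ((gal E sigma) ^+ n)%g x = iter n sigma x.
Proof.
move=> Ex; elim: n => [|n IH]; first by rewrite expg0 gal_id.
rewrite expgSr galM ?memv_gal // IH /= galK //.
rewrite -IH; exact: memv_gal.
Qed.


Lemma iter_betaE (sE : (sigma @: E <= E)%VS) n : iter n sigma beta \in E.
Proof. by rewrite -tau_iter ?memv_gal ?betaE. Qed.

Lemma fwd : inJ p sigma 1 delta -> kindex p xi sigma delta != 0%N ->
  cyclic_ext_of_degree E (p ^ 2)%N.
Proof.
move=> [eta Keta /= rd] kd.
have sd : sigma delta = eta ^+ p * delta by rewrite -rd /rho divfK.
have [k Nk] : exists k : 'I_p, galNorm 1 K eta = z ^+ k.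
  apply: norm_root; rewrite -galNormX -rd /rho galNormM galNormV.
  by rewrite galNorm_gal ?galK1 // mulfV // norm_neq0.
have := @kindex_core delta eta k Kd d0 Keta sd Nk (ltn_ord k).
move=> kdk; rewrite kdk in kd.
have eb0 : eta * beta != 0.
  rewrite mulf_neq0 ?beta0 //; apply: contraNneq d0 => e0.
  suff : sigma delta = 0 by move/eqP; rewrite f_eq0 (negbTE d0).
  by rewrite sd e0 expr0n gtn_eqF ?p_gt0 // mul0r.
have [j sbj] : exists j : 'I_p, sigma beta = z ^+ j * (eta * beta).
  by apply: rootsP eb0 _; rewrite -fX bp sd exprMn bp.
pose c := z ^+ j * eta.
have Kc : c \in K by rewrite rpredM // (subvP (sub1v _)) ?zX_in1.
have sb : sigma beta = c * beta by rewrite sbj mulrA.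
have Nc : galNorm 1 K c = z ^+ k by rewrite galNormM norm_z mul1r.
have itp : iter p sigma beta = z ^+ k * beta by rewrite (iterQ c beta p sb) Qp // Nc.
have itpm m : iter (p * m) sigma beta = z ^+ (k * m) * beta.
  elim: m => [|m IH]; first by rewrite !muln0 expr0 mul1r.
  rewrite mulnS iterD IH iter_scal ?zX_in1 // itp mulrA -exprD.
  by rewrite mulnS addnC.
have sbE : sigma beta \in E.
  by rewrite sb rpredM // ?betaE // (subvP KE).
have sE := sigmaE_sub sbE.
set tau := gal E sigma.
have zk1 : z ^+ k != 1.
  by rewrite -(prim_order_dvd z_prim) gtnNdvd ?lt0n // ltn_ord.
have tau_p : (tau ^+ p)%g != 1%g.
  apply: contra zk1 => /eqP t1.
  have := tau_iter sE p beta betaE; rewrite t1 gal_id itp => e.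
  by apply/eqP; apply: (mulIf beta0); rewrite mul1r -e.
have tauK : (tau ^+ (p * p))%g \in ('Gal(E / K))%g.
  rewrite gal_kHom ?KE //; apply/kAHomP => x Kx.
  by rewrite tau_iter ?(subvP KE) // iter_pm.
have tau_pp : (tau ^+ (p * p))%g = 1%g.
  apply/eqP; rewrite (gal_adjoin_eq (K := <<1; alpha>>%AS)) ?group1 //.
  rewrite tau_iter ?betaE // itpm gal_id mulnC exprM (prim_expr_order z_prim).
  by rewrite expr1n mul1r.
have otau : #[tau]%g = (p ^ 2)%N.
  have : (#[tau] %| p ^ 2)%N by rewrite order_dvdn -mulnn tau_pp.
  case/(dvdn_pfactor _ _ pp) => m; rewrite leq_eqVlt => /orP[/eqP -> //|].
  rewrite ltnS => m1 om; exfalso.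
  have : (#[tau] %| p)%N by rewrite om -{2}(expn1 p) dvdn_exp2l.
  by rewrite order_dvdn (negbTE tau_p).
have cardG : #|<[tau]>%g| = (p * p)%N by rewrite -orderE otau mulnn.
have hd := dim_fixedField <[tau]>%G; rewrite /= cardG in hd.
set d := \dim (fixedField _) in hd.
have dpos : (0 < d)%N by rewrite adim_gt0.
have dimE_ge : (p * p <= \dim E)%N by rewrite hd leq_div.
have dimE : \dim E = (p * p)%N by apply/eqP; rewrite eqn_leq dimE_le.
have d1 : d = 1%N.
  apply/eqP; rewrite eqn_leq dpos andbT leqNgt; apply/negP => d2.
  have := ltn_Pdiv d2 (adim_gt0 E); rewrite -hd dimE ltnn //.
have fix1 : fixedField <[tau]>%g = 1%VS.
  apply/eqP; rewrite eq_sym eqEdim sub1v dimv1 -/d d1 //.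
rewrite /cyclic_ext_of_degree; split.
- by have := fixedField_galois <[tau]>%g; rewrite fix1.
- by have := gal_fixedField <[tau]>%G; rewrite /= fix1 => ->; apply: cycle_cyclic.
- by rewrite dimE mulnn.
Qed.


Lemma bwd : cyclic_ext_of_degree E (p ^ 2)%N ->
  inJ p sigma 1 delta /\ kindex p xi sigma delta != 0%N.
Proof.
case=> galE cycE dimE.
have nE : normalField 1 E by case/and3P: galE.
have sE : (sigma @: E <= E)%VS.
  have := forall_inP nE (sigma : 'AEnd(L)).
  rewrite inE kAut1E subvf => /(_ isT) /eqP ->; exact: subvv.
set tau := gal E sigma.
have galKE : galois K E by apply: galoisS galE; rewrite sub1v KE.
have tauE : tau \in ('Gal(E / 1%VS))%g by apply: galE1.
have tau_b : tau beta = sigma beta by rewrite galK ?betaE.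
have sbE : sigma beta \in E by rewrite -tau_b memv_gal ?betaE.
pose c := sigma beta / beta.
have cE : c \in E by rewrite rpredM ?rpredV ?betaE.
have cfix : c \in fixedField ('Gal(E / K))%g.
  apply/fixedFieldP => // g gK.
  have gE : g \in ('Gal(E / 1%VS))%g by apply: galE1.
  have gb : (g beta) ^+ p = beta ^+ p.
    by rewrite -fX bp (fixed_gal KE gK Kd).
  have [i gbi] := rootsP beta0 gb.
  have comm : (tau * g)%g = (g * tau)%g.
    by have := centsP (cyclic_abelian cycE) tau tauE g gE.
  have e1 : g (tau beta) = tau (g beta).
    by rewrite -!galM ?betaE // comm.
  have zE : z ^+ i \in E by apply: (subvP KE); apply: (subvP (sub1v _)); exact: zX_in1.
  have zbE : z ^+ i * beta \in E by rewrite rpredM // betaE.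
  rewrite /c fdiv -tau_b e1 gbi (galK sE zbE) fM (galF sigma _ (zX_in1 i)).
  by rewrite tau_b invfM mulrACA divff ?mul1r // expf_neq0 // z_neq0.
have /galois_fixedField fixK := galKE.
have cK : c \in K by rewrite -fixK.
have sb : sigma beta = c * beta by rewrite /c divfK ?beta0.
have sd : sigma delta = c ^+ p * delta by rewrite -bp fX sb exprMn.
have cp : c ^+ p = sigma delta / delta by rewrite sd mulfK.
split; first by exists c => //=; rewrite /rho cp.
have [k Nk] : exists k : 'I_p, galNorm 1 K c = z ^+ k.
  apply: norm_root; rewrite -galNormX cp galNormM galNormV.
  by rewrite galNorm_gal ?galK1 // mulfV // norm_neq0.
rewrite (@kindex_core delta c k Kd d0 cK sd Nk (ltn_ord k)).
apply/negP => /eqP k0.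
have itp : iter p sigma beta = beta.
  by rewrite (iterQ c beta p sb) Qp // Nk k0 expr0 mul1r.
have tauK : (tau ^+ p)%g \in ('Gal(E / K))%g.
  rewrite gal_kHom ?KE //; apply/kAHomP => x Kx.
  by rewrite tau_iter ?(subvP KE) // iter_p.
have tau_p : (tau ^+ p)%g = 1%g.
  apply/eqP; rewrite (gal_adjoin_eq (K := <<1; alpha>>%AS)) ?group1 //.
  by rewrite (tau_iter sE p beta betaE) itp gal_id.
have tna : tau alpha != alpha.
  rewrite (galK sE (subvP KE _ alphaK)) sa; apply/negP => /eqP e.
  have /eqP : z = 1 by apply: (mulIf alpha_neq0); rewrite mul1r.
  rewrite -(expr1 z) -(prim_order_dvd z_prim) dvdn1 => /eqP p1.
  by have := p_gt1; rewrite p1.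
have tau1 : tau != 1%g by apply: contraNneq tna => ->; rewrite gal_id.
have otau : #[tau]%g = p := nt_prime_order pp tau_p tau1.
have cardK : #|('Gal(E / K))%g| = p.
  by rewrite -(galois_dim galKE) dimE dimK expnS expn1 mulKn // p_gt0.
have eqG : <[tau]>%g :==: ('Gal(E / K))%g.
  rewrite (eq_subG_cyclic cycE) ?cycle_subG ?galS ?sub1v //.
  by rewrite -orderE otau cardK.
have tK : tau \in ('Gal(E / K))%g by rewrite -(eqP eqG) cycle_id.
by move: tna; rewrite (fixed_gal KE tK alphaK) eqxx.
Qed.

End Iff.

End Main.

Theorem lemma5 (F : fieldType) (L : splittingFieldType F) (p : nat) (xi a : F)
  (alpha : L) (sigma : gal_of <<1; alpha>>%VS) :
  prime p -> odd p -> p.-primitive_root xi ->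
  a != 0 -> alpha ^+ p = a%:A -> \dim <<1; alpha>>%VS = p ->
  sigma alpha = xi%:A * alpha ->
  let K := <<1; alpha>>%VS in
  let Upsilon := exists2 x, (x \in K) && (x != 0) & galNorm 1%VS K x = xi%:A in
  (Upsilon ->
     (exists2 delta, (delta \in K) && (delta != 0) &
        inJ p sigma 1 delta /\ kindex p xi sigma delta != 0%N) /\
     (forall delta beta : L, delta \in K -> delta != 0 -> beta ^+ p = delta ->
        (inJ p sigma 1 delta /\ kindex p xi sigma delta != 0%N) <->
        cyclic_ext_of_degree <<K; beta>>%VS (p ^ 2)%N)) /\
  (~ Upsilon ->
     [/\ inJ p sigma 2 alpha, ~ inJ p sigma 1 alpha,
         kindex p xi sigma alpha != 0%N &
         forall gamma : L, gamma \in K -> gamma != 0 -> inJ p sigma 1 gamma ->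
           kindex p xi sigma gamma = 0%N]).
Proof.
move=> pp op pxi a0 alphap dimK sa K Ups; split.
- move=> U; split; first exact (part1a _ _ _ _ _ _ _ pp pxi a0 alphap sa U).
  move=> delta beta Kd d0 bp; apply: conj.
  + by case=> h1 h2; exact (fwd _ _ _ _ _ _ _ pp pxi a0 alphap dimK sa _ _ Kd d0 bp h1 h2).
  + by move=> h; exact (bwd _ _ _ _ _ _ _ pp pxi a0 alphap dimK sa _ _ Kd d0 bp h).
- move=> nU; split.
  + exact (inJ2_alpha _ _ _ _ _ _ _ pp pxi a0 alphap sa).
  + exact (nJ1_alpha _ _ _ _ _ _ _ pp op pxi a0 alphap sa nU).
  + by rewrite (kindex_alpha _ _ _ _ _ _ _ pp op pxi a0 alphap sa).
  + exact (J1_index0 _ _ _ _ _ _ _ pp pxi a0 alphap sa nU).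
Qed.
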